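(* Let $\mathcal C$ be a $k$-coloured operad (in the sense of the context). Then the enveloping operad $\mathrm{Env}(\mathcal C)$ is isomorphic to the operad $\mathrm{AC}(\mathcal C^+)$ of anticoloured syntax trees on $\mathcal C^+$. (Under the isomorphism, each $\equiv$-class of syntax trees on $\bar{\mathcal C}$ is sent to the unique anticoloured syntax tree it contains.)
   Context: All operads are nonsymmetric operads in the category of sets. Fix $k\ge 1$ and write $[k]=\{1,\dots,k\}$. A $k$-coloured operad $\mathcal C=\biguplus_{n\ge1}\mathcal C(n)$ assigns to each $x\in\mathcal C(n)$ an output colour $\mathrm{Out}(x)\in[k]$ and input colours $\mathrm{In}_1(x),\dots,\mathrm{In}_n(x)\in[k]$. It has partial compositions $x\circ_i y\in\mathcal C(n+m-1)$, for $x\in\mathcal C(n)$, $y\in\mathcal C(m)$ and $i\in[n]$, which are defined exactly when $\mathrm{Out}(y)=\mathrm{In}_i(x)$. The composite has output colour $\mathrm{Out}(x)$ and input colours $\mathrm{In}_1(x),\dots,\mathrm{In}_{i-1}(x),\mathrm{In}_1(y),\dots,\mathrm{In}_m(y),\mathrm{In}_{i+1}(x),\dots,\mathrm{In}_n(x)$. These compositions satisfy the usual associativity and unit axioms of coloured operads. It is assumed that $\mathcal C(1)=\{\mathbf 1_c : c\in[k]\}$, where $\mathbf 1_c$ is a unit with output and input colour $c$, and that each $\mathcal C(n)$ is finite. An (uncoloured) operad is a $1$-coloured operad. Let $\mathcal C^+=\mathcal C\setminus\mathcal C(1)$, and let $\bar{\mathcal C}$ be the same graded set with all colours forgotten, i.e.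 all colours set to $1$. The enveloping operad $\mathrm{Env}(\mathcal C)$ is the quotient of the free uncoloured operad on $\bar{\mathcal C}$ (whose elements are planar rooted syntax trees with nodes of arity $\ell$ labelled by elements of $\mathcal C(\ell)$, composed by grafting) by the smallest operadic congruence $\equiv$ such that $\mathfrak c(x)\circ_i\mathfrak c(y)\equiv\mathfrak c(x\circ_i y)$ for all $x,y\in\mathcal C^+$ with $x\circ_i y$ defined in $\mathcal C$. Here $\mathfrak c(x)$ denotes the corolla, i.e. the tree with a single internal node labelled $x$. An anticoloured syntax tree on $\mathcal C^+$ is a planar rooted tree whose internal nodes of arity $\ell$ are labelled by elements of $\mathcal C(\ell)$, $\ell\ge2$, such that whenever an internal node $s$ labelled $y$ is the $i$th child of an internal node $r$ labelled $x$, one has $\mathrm{In}_i(x)\ne\mathrm{Out}(y)$. The set $\mathrm{AC}(\mathcal C^+)$ of such trees, with the one-leaf tree as unit, is an operad with the following composition. For trees $S,T$ and a leaf index $i$ of $S$, let $r$ be the parent node of the $i$th leaf of $S$, let that leaf be the $j$th child of $r$, and let $s$ be the root of $T$. Then $S\circ_i T$ is obtained by grafting the root of $T$ on the $i$th leaf of $S$. If moreover $\mathrm{Out}(T)=\mathrm{In}_j(r)$, one then replaces the two nodes $r$ (label $x$) and $s$ (label $y$) by a single node labelled $x\circ_j y$. *)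

(* Defs.v *)
From mathcomp Require Import all_boot.

Set Implicit Arguments.
Unset Strict Implicit.
Unset Printing Implicit Defensive.

(* Conventions: colours are natural numbers c < k (standing for [k] shifted  *)
(* by one); input positions and partial-composition indices are 0-based      *)
(* (index i here is index i+1 in the paper).  The partial composition        *)
(* ccomp x i y is a total function, but all axioms only constrain it when    *)
(* x o_i y is defined, i.e. i < arity x and cout y = In_i(x).                *)

Record coloured_operad (k : nat) := ColOperad {
  celt : eqType;
  arity : celt -> nat;
  cout : celt -> nat;
  cin : celt -> seq nat;
  ccomp : celt -> nat -> celt -> celt;
  cunit : nat -> celt;
  arity_pos : forall x, 0 < arity x;
  size_cin : forall x, size (cin x) = arity x;
  cout_lt : forall x, cout x < k;
  cin_lt : forall x, all (fun c => c < k) (cin x);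
  finite_arity : forall n, exists s : seq celt, forall x, arity x = n -> x \in s;
  ccomp_arity : forall x i y, i < arity x -> cout y = nth 0 (cin x) i ->
      arity (ccomp x i y) = arity x + arity y - 1;
  ccomp_cout : forall x i y, i < arity x -> cout y = nth 0 (cin x) i ->
      cout (ccomp x i y) = cout x;
  ccomp_cin : forall x i y, i < arity x -> cout y = nth 0 (cin x) i ->
      cin (ccomp x i y) = take i (cin x) ++ cin y ++ drop i.+1 (cin x);
  cunit_arity : forall c, c < k -> arity (cunit c) = 1;
  cunit_cout : forall c, c < k -> cout (cunit c) = c;
  cunit_cin : forall c, c < k -> cin (cunit c) = [:: c];
  arity1_unit : forall x, arity x = 1 -> exists2 c, c < k & x = cunit c;
  ccomp_unitl : forall x, ccomp (cunit (cout x)) 0 x = x;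
  ccomp_unitr : forall x i, i < arity x -> ccomp x i (cunit (nth 0 (cin x) i)) = x;
  ccomp_assoc_seq : forall x y z i j,
      i < arity x -> cout y = nth 0 (cin x) i ->
      j < arity y -> cout z = nth 0 (cin y) j ->
      ccomp (ccomp x i y) (i + j) z = ccomp x i (ccomp y j z);
  ccomp_assoc_par : forall x y z i j,
      i < j -> j < arity x ->
      cout y = nth 0 (cin x) i -> cout z = nth 0 (cin x) j ->
      ccomp (ccomp x i y) (j + arity y - 1) z = ccomp (ccomp x j z) i y
}.

Arguments celt {k}.
Arguments arity {k C} : rename.
Arguments cout {k C} : rename.
Arguments cin {k C} : rename.
Arguments ccomp {k C} : rename.
Arguments cunit {k} C : rename.

Inductive tree (A : Type) : Type :=
| Leaf : tree A
| Node : A -> seq (tree A) -> tree A.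

Arguments Leaf {A}.
Arguments Node {A}.

Fixpoint nleaves A (t : tree A) : nat :=
  match t with
  | Leaf => 1
  | Node _ ts => sumn (map (@nleaves A) ts)
  end.

Definition is_leaf A (t : tree A) : bool := if t is Leaf then true else false.

Fixpoint graft A (S : tree A) (i : nat) (T : tree A) : tree A :=
  match S with
  | Leaf => if i == 0 then T else Leaf
  | Node x ts =>
      Node x ((fix gs (ts : seq (tree A)) (i : nat) : seq (tree A) :=
                 match ts with
                 | [::] => [::]
                 | t :: ts' => if i < nleaves t then graft t i T :: ts'
                               else t :: gs ts' (i - nleaves t)
                 end) ts i)
  end.

Fixpoint locate A (ts : seq (tree A)) (i : nat) : nat * nat :=
  match ts with
  | [::] => (0, i)
  | t :: ts' => if i < nleaves t then (0, i)
                else let: (j, l) := locate ts' (i - nleaves t) in (j.+1, l)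
  end.

Section Coloured.
Variables (k : nat) (C : coloured_operad k).

Definition ctree := tree (celt C).

Definition corolla (x : celt C) : ctree := Node x (nseq (arity x) Leaf).

(* Syntax trees on Cbar^+ : each internal node labelled x of arity >= 2 has
   exactly arity x children. *)
Fixpoint wf_tree (t : ctree) : bool :=
  match t with
  | Leaf => true
  | Node x ts => [&& size ts == arity x, 1 < arity x & all wf_tree ts]
  end.

Fixpoint anticoloured (t : ctree) : bool :=
  match t with
  | Leaf => true
  | Node x ts =>
      [&& size ts == arity x, 1 < arity x,
          all (fun p : nat * ctree =>
                 match p.2 with
                 | Leaf => true
                 | Node y _ => cout y != nth 0 (cin x) p.1
                 end) (zip (iota 0 (size ts)) ts)
        & all anticoloured ts]
  end.

Definition merge_graft (x : celt C) (ts : seq ctree) (j : nat) (T : ctree) : ctree :=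
  match T with
  | Leaf => Node x ts
  | Node y us =>
      if cout y == nth 0 (cin x) j
      then Node (ccomp x j y) (take j ts ++ us ++ drop j.+1 ts)
      else Node x (set_nth Leaf ts j T)
  end.

Fixpoint acgraft (S : ctree) (i : nat) (T : ctree) : ctree :=
  match S with
  | Leaf => if i == 0 then T else Leaf
  | Node x ts =>
      let: (j, l) := locate ts i in
      if (j < size ts) && is_leaf (nth Leaf ts j) then merge_graft x ts j T
      else
      Node x ((fix gs (ts : seq ctree) (i : nat) : seq ctree :=
                 match ts with
                 | [::] => [::]
                 | t :: ts' => if i < nleaves t then acgraft t i T :: ts'
                               else t :: gs ts' (i - nleaves t)
                 end) ts i)
  end.

Inductive env_cong : ctree -> ctree -> Prop :=
| env_gen x i y : 1 < arity x -> 1 < arity y -> i < arity x ->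
    cout y = nth 0 (cin x) i ->
    env_cong (graft (corolla x) i (corolla y)) (corolla (ccomp x i y))
| env_refl t : wf_tree t -> env_cong t t
| env_sym s t : env_cong s t -> env_cong t s
| env_trans s t u : env_cong s t -> env_cong t u -> env_cong s u
| env_comp S S' T T' i : env_cong S S' -> env_cong T T' -> i < nleaves S ->
    env_cong (graft S i T) (graft S' i T').

End Coloured.

Arguments corolla {k C}.
Arguments wf_tree {k C}.
Arguments anticoloured {k C}.
Arguments acgraft {k C}.
Arguments env_cong {k C}.

(* Main.v *)
Require Import Defs.
From mathcomp Require Import all_boot.
From mathcomp Require Import zify.
Set Implicit Arguments.
Unset Strict Implicit.
Unset Printing Implicit Defensive.

Section S.
Variables (k : nat) (C : coloured_operad k).
Notation T := (ctree C).
Notation lab := (celt C).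

Fixpoint allT (P : T -> Prop) (ts : seq T) : Prop :=
  match ts with [::] => True | t :: ts => P t /\ allT P ts end.

Lemma tree_ind' (P : T -> Prop) : P Leaf ->
  (forall x ts, allT P ts -> P (Node x ts)) -> forall t, P t.
Proof.
move=> hL hN.
refine (fix IH t := match t with Leaf => hL | Node x ts => hN x ts
  ((fix F ts := match ts return allT P ts with [::] => I
      | t :: ts => conj (IH t) (F ts) end) ts) end).
Qed.

Definition nleavesL (ts : seq T) := sumn (map (@nleaves _) ts).

Lemma nleavesN x ts : nleaves (Node x ts) = nleavesL ts.
Proof. by []. Qed.

Lemma nleavesL_cat A B : nleavesL (A ++ B) = nleavesL A + nleavesL B.
Proof. by rewrite /nleavesL map_cat sumn_cat. Qed.

Lemma nleavesL_cons t A : nleavesL (t :: A) = nleaves t + nleavesL A.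
Proof. by []. Qed.

Lemma nleavesL_nseq n : nleavesL (nseq n Leaf) = n.
Proof. by elim: n => //= n; rewrite /nleavesL /= => ->. Qed.

Definition gsG (N : T) := fix gs (ts : seq T) (i : nat) : seq T :=
  match ts with
  | [::] => [::]
  | t :: ts' => if i < nleaves t then graft t i N :: ts'
                else t :: gs ts' (i - nleaves t)
  end.

Lemma graftN x ts i N : graft (Node x ts) i N = Node x (gsG N ts i).
Proof. by []. Qed.

Definition gsA (N : T) := fix gs (ts : seq T) (i : nat) : seq T :=
  match ts with
  | [::] => [::]
  | t :: ts' => if i < nleaves t then acgraft t i N :: ts'
                else t :: gs ts' (i - nleaves t)
  end.

Lemma acgraftN x ts i N : acgraft (Node x ts) i N =
  let: (j, l) := locate ts i in
  if (j < size ts) && is_leaf (nth Leaf ts j) then merge_graft x ts j N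
  else Node x (gsA N ts i).
Proof. by []. Qed.

Lemma gsG_app N pre t post i : i < nleaves t ->
  gsG N (pre ++ t :: post) (nleavesL pre + i) = pre ++ graft t i N :: post.
Proof.
move=> hi; elim: pre => [|u pre IH] /=; first by rewrite hi.
by rewrite nleavesL_cons -addnA ltnNge leq_addr /= addKn IH.
Qed.

Lemma gsA_app N pre t post i : i < nleaves t ->
  gsA N (pre ++ t :: post) (nleavesL pre + i) = pre ++ acgraft t i N :: post.
Proof.
move=> hi; elim: pre => [|u pre IH] /=; first by rewrite hi.
by rewrite nleavesL_cons -addnA ltnNge leq_addr /= addKn IH.
Qed.

Lemma locate_app pre t post i : i < nleaves t ->
  locate (pre ++ t :: post) (nleavesL pre + i) = (size pre, i).
Proof.
move=> hi; elim: pre => [|u pre IH] /=; first by rewrite hi.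
by rewrite nleavesL_cons -addnA ltnNge leq_addr /= addKn IH.
Qed.

Lemma graft_node x pre t post i N : i < nleaves t ->
  graft (Node x (pre ++ t :: post)) (nleavesL pre + i) N =
  Node x (pre ++ graft t i N :: post).
Proof. by move=> hi; rewrite graftN gsG_app. Qed.

Lemma acgraft_node x pre t post i N : i < nleaves t ->
  acgraft (Node x (pre ++ t :: post)) (nleavesL pre + i) N =
  if t is Leaf then merge_graft x (pre ++ Leaf :: post) (size pre) N
  else Node x (pre ++ acgraft t i N :: post).
Proof.
move=> hi; rewrite acgraftN locate_app // size_cat /= (_ : size pre < _) /=; last by lia.
rewrite nth_cat ltnn subnn /=.
by case: t hi => [|y vs] hi //=; rewrite gsA_app.
Qed.

Lemma merge_graft_leaf (x : lab) (pre post : seq T) (N : T) :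
  merge_graft x (pre ++ Leaf :: post) (size pre) N =
  match N with
  | Leaf => Node x (pre ++ Leaf :: post)
  | Node z ws => if cout z == nth 0 (cin x) (size pre)
                 then Node (ccomp x (size pre) z) (pre ++ ws ++ post)
                 else Node x (pre ++ N :: post)
  end.
Proof.
case: N => [|z ws] //=.
have -> : drop (size pre).+1 (pre ++ Leaf :: post) = post by elim: pre => [|u pre /= ->]; rewrite /= ?drop0.
have -> : set_nth Leaf (pre ++ Leaf :: post) (size pre) (Node z ws) =
  pre ++ Node z ws :: post by elim: pre => //= u pre ->.
by rewrite take_size_cat.
Qed.

Lemma split_leaves ts i : i < nleavesL ts ->
  exists pre t post l, [/\ ts = pre ++ t :: post, i = nleavesL pre + l
                        & l < nleaves t].
Proof.
elim: ts i => [|t ts IH] i //.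
rewrite nleavesL_cons => hi.
case: (ltnP i (nleaves t)) => h.
  by exists [::], t, ts, i.
have [pre [u [post [l [E1 E2 E3]]]]] := IH (i - nleaves t) ltac:(lia).
exists (t :: pre), u, post, l; split => //; first by rewrite E1.
by rewrite nleavesL_cons -addnA -E2; lia.
Qed.

Lemma wf_node (x : lab) (ts : seq T) : wf_tree (Node x ts) =
  [&& size ts == arity x, 1 < arity x & all wf_tree ts].
Proof. by []. Qed.

Lemma ac_wf (t : T) : anticoloured t -> wf_tree t.
Proof.
elim/tree_ind': t => // x ts IH /= /and4P [-> -> _ hA] /=.
elim: ts IH hA => //= t ts IHts [h1 h2] /andP [a1 a2].
by rewrite h1 //= IHts.
Qed.


Lemma corolla_wf (x : lab) : 1 < arity x -> wf_tree (corolla x).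
Proof.
move=> h; rewrite /corolla wf_node size_nseq eqxx h /=.
by elim: (arity x).
Qed.

Lemma gsG_wf (N : T) ts i : allT (fun t => forall i, wf_tree t -> wf_tree (graft t i N)) ts ->
  all wf_tree ts -> size (gsG N ts i) = size ts /\ all wf_tree (gsG N ts i).
Proof.
elim: ts i => [|t ts IH] i //= [h1 h2] /andP [w1 w2].
case: ifP => _ /=; first by rewrite h1 // w2.
by have [-> ->] := IH (i - nleaves t) h2 w2; rewrite w1.
Qed.

Lemma graft_wf (S N : T) i : wf_tree S -> wf_tree N -> wf_tree (graft S i N).
Proof.
move=> + wN; elim/tree_ind': S i => [|x ts IH] i /=; first by case: ifP.
case/and3P => /eqP hs ha hw; rewrite -/(gsG N ts i).
have := @gsG_wf N ts i IH hw. case=> -> ->.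
by rewrite hs eqxx ha.
Qed.

Lemma env_cong_wf (s t : T) : env_cong s t -> wf_tree s /\ wf_tree t.
Proof.
elim=> {s t}.
- move=> x i y hx hy hi hc; split; last first.
    apply: corolla_wf; rewrite ccomp_arity //; lia.
  by apply: graft_wf; apply: corolla_wf.
- by move=> t ht.
- by move=> s t _ [a b].
- by move=> s t u _ [a b] _ [c d].
- move=> S S' T0 T' i _ [w1 w2] _ [w3 w4] _.
  by split; apply: graft_wf.
Qed.

Lemma graft_node' (x : lab) (L pre post : seq T) i (t : T) :
  L = pre ++ Leaf :: post -> i = nleavesL pre ->
  graft (Node x L) i t = Node x (pre ++ t :: post).
Proof. by move=> -> ->; rewrite -[nleavesL pre]addn0 graft_node. Qed.

Lemma graft_cong (S S' t U U' : T) i : env_cong S S' -> wf_tree t ->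
  i < nleaves S -> graft S i t = U -> graft S' i t = U' -> env_cong U U'.
Proof. by move=> h wt hi <- <-; apply: env_comp => //; apply: env_refl. Qed.

Lemma wf_swap (x : lab) (A B : seq T) (t u : T) :
  wf_tree (Node x (A ++ t :: B)) -> wf_tree u -> wf_tree (Node x (A ++ u :: B)).
Proof.
rewrite !wf_node !size_cat /= !all_cat /= => /and3P [-> -> /and3P [-> _ ->]] ->.
by [].
Qed.

Lemma replace_child (x : lab) (A B : seq T) (t t' : T) : env_cong t t' ->
  wf_tree (Node x (A ++ t :: B)) ->
  env_cong (Node x (A ++ t :: B)) (Node x (A ++ t' :: B)).
Proof.
move=> h w.
have wS : wf_tree (Node x (A ++ Leaf :: B)) by apply: wf_swap w _.
have := env_comp (env_refl wS) h (i := nleavesL A) _.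
rewrite !(@graft_node' x _ A B) //; apply.
by rewrite nleavesN nleavesL_cat nleavesL_cons /=; lia.
Qed.

Lemma node_cong (x : lab) (f : T -> T) ts A :
  allT (fun t => env_cong t (f t)) ts -> wf_tree (Node x (A ++ ts)) ->
  env_cong (Node x (A ++ ts)) (Node x (A ++ map f ts)).
Proof.
elim: ts A => [|t ts IH] A /=; first by move=> _ w; apply: env_refl.
move=> [h1 h2] w.
apply: env_trans (replace_child h1 w) _.
rewrite -!cat_rcons; apply: IH => //.
rewrite cat_rcons; apply: wf_swap w _.
by have [] := env_cong_wf h1.
Qed.

Lemma fill_ind (P : seq T -> Prop) n : P (nseq n Leaf) ->
  (forall L1 L2 t, wf_tree t -> P (L1 ++ Leaf :: L2) -> P (L1 ++ t :: L2)) ->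
  forall L, size L = n -> all wf_tree L -> P L.
Proof.
move=> hb hs.
suff H : forall L m, m + size L = n -> all wf_tree L -> P (nseq m Leaf ++ L).
  by move=> L hL wL; apply: (H L 0) => //; rewrite add0n.
elim=> [|t L IH] m /=; first by rewrite addn0 cats0 => ->.
move=> hm /andP [wt wL]; apply: hs => //.
have -> : nseq m Leaf ++ Leaf :: L = nseq m.+1 Leaf ++ L.
  by elim: m {hm IH} => //= m ->.
by apply: IH => //; rewrite addSnnS.
Qed.

Definition Qr (x y : lab) (A vs B : seq T) :=
  env_cong (Node x (A ++ Node y vs :: B)) (Node (ccomp x (size A) y) (A ++ vs ++ B)).

Lemma rep_B x y A vs B1 B2 t : Qr x y A vs (B1 ++ Leaf :: B2) -> wf_tree t ->
  Qr x y A vs (B1 ++ t :: B2).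
Proof.
move=> h wt; apply: (graft_cong (i := nleavesL (A ++ Node y vs :: B1)) h wt).
- rewrite nleavesN !nleavesL_cat !nleavesL_cons nleavesL_cat nleavesL_cons /=; lia.
- by rewrite (@graft_node' _ _ (A ++ Node y vs :: B1) B2) -?catA.
- rewrite (@graft_node' _ _ (A ++ vs ++ B1) B2) -?catA //.
  by rewrite !nleavesL_cat nleavesL_cons nleavesN.
Qed.

Lemma rep_vs x y A V1 V2 B t : Qr x y A (V1 ++ Leaf :: V2) B -> wf_tree t ->
  Qr x y A (V1 ++ t :: V2) B.
Proof.
move=> h wt; apply: (graft_cong (i := nleavesL A + nleavesL V1) h wt).
- rewrite nleavesN !nleavesL_cat !nleavesL_cons nleavesN nleavesL_cat nleavesL_cons /=; lia.
- rewrite graft_node; last by rewrite nleavesN nleavesL_cat nleavesL_cons /=; lia.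
  by rewrite (@graft_node' _ _ V1 V2).
- rewrite (@graft_node' _ _ (A ++ V1) (V2 ++ B)) -?catA //.
  by rewrite !nleavesL_cat.
Qed.

Lemma rep_A x y A1 A2 vs B t : Qr x y (A1 ++ Leaf :: A2) vs B -> wf_tree t ->
  Qr x y (A1 ++ t :: A2) vs B.
Proof.
rewrite /Qr (_ : size (A1 ++ t :: A2) = size (A1 ++ Leaf :: A2)); last first.
  by rewrite !size_cat.
move=> h wt; apply: (graft_cong (i := nleavesL A1) h wt).
- rewrite nleavesN !nleavesL_cat !nleavesL_cons /=; lia.
- by rewrite (@graft_node' _ _ A1 (A2 ++ Node y vs :: B)) -?catA.
- by rewrite (@graft_node' _ _ A1 (A2 ++ vs ++ B)) -?catA.
Qed.

Lemma Qr_base x y a m b : a + b.+1 = arity x -> m = arity y -> 1 < arity x ->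
  1 < arity y -> cout y = nth 0 (cin x) a ->
  Qr x y (nseq a Leaf) (nseq m Leaf) (nseq b Leaf).
Proof.
move=> hax hm hx hy hc.
have hi : a < arity x by lia.
have := env_gen hx hy hi hc.
rewrite /corolla -hax nseqD (_ : nseq b.+1 Leaf = Leaf :: nseq b Leaf) // (@graft_node' _ _ (nseq a Leaf) (nseq b Leaf)) //;
  last by rewrite nleavesL_nseq.
rewrite ccomp_arity // /Qr size_nseq hm -!nseqD.
by rewrite (_ : arity x + arity y - 1 = a + (arity y + b)) //; lia.
Qed.

Lemma G3 x y A vs B : size A + (size B).+1 = arity x -> size vs = arity y ->
  1 < arity x -> 1 < arity y -> cout y = nth 0 (cin x) (size A) ->
  all wf_tree A -> all wf_tree vs -> all wf_tree B -> Qr x y A vs B.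
Proof.
move=> hax hm hx hy hc wA wvs wB.
have h1 : forall B', size B' = size B -> all wf_tree B' ->
    Qr x y (nseq (size A) Leaf) (nseq (size vs) Leaf) B'.
  apply: (fill_ind (P := fun B' => Qr x y (nseq (size A) Leaf) (nseq (size vs) Leaf) B')).
    exact: Qr_base.
  by move=> L1 L2 t wt h; apply: rep_B.
have h2 : forall vs', size vs' = size vs -> all wf_tree vs' ->
    Qr x y (nseq (size A) Leaf) vs' B.
  apply: (fill_ind (P := fun vs' => Qr x y (nseq (size A) Leaf) vs' B)).
    exact: h1.
  by move=> L1 L2 t wt h; apply: rep_vs.
apply: (fill_ind (P := fun A' => Qr x y A' vs B)) => //.
  by rewrite /Qr; move: (h2 vs erefl wvs); rewrite /Qr size_nseq.
by move=> L1 L2 t wt h; apply: rep_A.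
Qed.

Lemma size_take_cin (x : lab) a : a < arity x -> size (take a (cin x)) = a.
Proof. by move=> h; rewrite size_takel // size_cin ltnW. Qed.

Lemma cin_lo (x z : lab) a p : a < arity x -> cout z = nth 0 (cin x) a -> p < a ->
  nth 0 (cin (ccomp x a z)) p = nth 0 (cin x) p.
Proof.
move=> ha hc hp; rewrite ccomp_cin // nth_cat size_take_cin // hp.
by rewrite nth_take.
Qed.

Lemma cin_mid (x z : lab) a q : a < arity x -> cout z = nth 0 (cin x) a ->
  q < arity z -> nth 0 (cin (ccomp x a z)) (a + q) = nth 0 (cin z) q.
Proof.
move=> ha hc hq; rewrite ccomp_cin // nth_cat size_take_cin // ltnNge leq_addr /=.
by rewrite addKn nth_cat size_cin hq.
Qed.

Lemma cin_hi (x z : lab) a p : a < arity x -> cout z = nth 0 (cin x) a -> a < p ->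
  nth 0 (cin (ccomp x a z)) (p + arity z - 1) = nth 0 (cin x) p.
Proof.
move=> ha hc hp; have hz := arity_pos z.
rewrite ccomp_cin // nth_cat size_take_cin // ltnNge (_ : a <= _) /=; last by lia.
rewrite nth_cat size_cin ltnNge (_ : arity z <= _) /=; last by lia.
rewrite nth_drop; congr nth; lia.
Qed.

Fixpoint mkp (x : lab) (off : nat) (ns : seq T) : lab * seq T :=
  match ns with
  | [::] => (x, [::])
  | n :: ns' =>
    match n with
    | Node y vs => if cout y == nth 0 (cin x) off then
         let p := mkp (ccomp x off y) (off + size vs) ns' in (p.1, vs ++ p.2)
       else let p := mkp x off.+1 ns' in (p.1, n :: p.2)
    | Leaf => let p := mkp x off.+1 ns' in (p.1, n :: p.2)
    end
  end.

Definition mrg (x : lab) off (n : T) :=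
  if n is Node y _ then cout y == nth 0 (cin x) off else false.

Lemma mkp_merge x off y vs ns : cout y = nth 0 (cin x) off ->
  mkp x off (Node y vs :: ns) =
  ((mkp (ccomp x off y) (off + size vs) ns).1, vs ++ (mkp (ccomp x off y) (off + size vs) ns).2).
Proof. by move=> h /=; rewrite h eqxx. Qed.

Lemma mkp_keep x off n ns : ~~ mrg x off n ->
  mkp x off (n :: ns) = ((mkp x off.+1 ns).1, n :: (mkp x off.+1 ns).2).
Proof. by case: n => [|y vs] //= /negbTE ->. Qed.

Lemma mkp_merge1 x off y vs ns : cout y = nth 0 (cin x) off ->
  (mkp x off (Node y vs :: ns)).1 = (mkp (ccomp x off y) (off + size vs) ns).1.
Proof. by move=> h; rewrite mkp_merge. Qed.

Lemma mkp_merge2 x off y vs ns : cout y = nth 0 (cin x) off ->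
  (mkp x off (Node y vs :: ns)).2 = vs ++ (mkp (ccomp x off y) (off + size vs) ns).2.
Proof. by move=> h; rewrite mkp_merge. Qed.

Lemma mkp_keep1 x off n ns : ~~ mrg x off n ->
  (mkp x off (n :: ns)).1 = (mkp x off.+1 ns).1.
Proof. by move=> h; rewrite mkp_keep. Qed.

Lemma mkp_keep2 x off n ns : ~~ mrg x off n ->
  (mkp x off (n :: ns)).2 = n :: (mkp x off.+1 ns).2.
Proof. by move=> h; rewrite mkp_keep. Qed.

Lemma mkp_cin x off ns a : off + size ns = arity x -> all wf_tree ns -> a < off ->
  nth 0 (cin (mkp x off ns).1) a = nth 0 (cin x) a.
Proof.
elim: ns x off => [|n ns IH] x off //= hs /andP [wn wns] ha.
case: n wn => [|y vs] wn.
  by apply: IH => //; lia.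
case/and3P: wn => /eqP hv hy wv.
case: eqP => hc /=; last by apply: IH => //; lia.
rewrite IH //; last 2 first.
- rewrite ccomp_arity //; lia.
- lia.
by rewrite cin_lo //; lia.
Qed.

Lemma mkp_arity x off ns : off + size ns = arity x -> all wf_tree ns ->
  arity (mkp x off ns).1 = off + size (mkp x off ns).2 /\
  arity x <= arity (mkp x off ns).1.
Proof.
elim: ns x off => [|n ns IH] x off /=; first by rewrite addn0 => ->.
move=> hs /andP [wn wns].
case: n wn => [|y vs] wn.
  by have [-> h] := IH x off.+1 ltac:(lia) wns; split => //=; lia.
case/and3P: wn => /eqP hv hy wv.
case: eqP => hc /=; last first.
  by have [-> h] := IH x off.+1 ltac:(lia) wns; split => //=; lia.
have hz := arity_pos y.
have ha : off < arity x by lia.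
have [e h] := IH (ccomp x off y) (off + size vs) ltac:(rewrite ccomp_arity //; lia) wns.
move: e h; rewrite ccomp_arity // size_cat => e h; split; first by rewrite e addnA.
move: h hz; clear; lia.
Qed.

Lemma mkp_nleaves x off ns : nleavesL (mkp x off ns).2 = nleavesL ns.
Proof.
elim: ns x off => [|n ns IH] x off //=.
case: n => [|y vs] /=; first by rewrite !nleavesL_cons IH.
case: eqP => _ /=; last by rewrite !nleavesL_cons IH.
by rewrite nleavesL_cat IH nleavesL_cons nleavesN.
Qed.

Definition colok (x : lab) off (ts : seq T) :=
  all (fun p : nat * T => match p.2 with
                 | Leaf => true
                 | Node y _ => cout y != nth 0 (cin x) p.1
                 end) (zip (iota off (size ts)) ts).

Lemma ac_node (x : lab) (ts : seq T) : anticoloured (Node x ts) =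
  [&& size ts == arity x, 1 < arity x, colok x 0 ts & all anticoloured ts].
Proof. by []. Qed.

Lemma colok_cons x off (t : T) ts : colok x off (t :: ts) =
  (match t with Leaf => true | Node y _ => cout y != nth 0 (cin x) off end)
  && colok x off.+1 ts.
Proof. by []. Qed.

Lemma colok_cat x off (A B : seq T) :
  colok x off (A ++ B) = colok x off A && colok x (off + size A) B.
Proof.
by rewrite /colok size_cat iotaD zip_cat ?size_iota // all_cat.
Qed.

Lemma colok_ext x x' off off' (ts : seq T) :
  (forall p, p < size ts -> nth 0 (cin x) (off + p) = nth 0 (cin x') (off' + p)) ->
  colok x off ts = colok x' off' ts.
Proof.
elim: ts off off' => [|t ts IH] off off' //= h.
rewrite !colok_cons (IH off.+1 off'.+1); last first.
  by move=> p hp; rewrite !addSnnS; apply: h.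
by have := h 0 erefl; rewrite !addn0 => ->.
Qed.

Lemma mkp_id x off ns : colok x off ns -> mkp x off ns = (x, ns).
Proof.
elim: ns off => [|n ns IH] off //.
rewrite colok_cons => /andP [h1 h2].
rewrite mkp_keep; first by rewrite IH.
by case: n h1 => [|y vs] //= /negbTE ->.
Qed.

Lemma mkp_ac x off ns : off + size ns = arity x -> all anticoloured ns ->
  colok (mkp x off ns).1 off (mkp x off ns).2 && all anticoloured (mkp x off ns).2.
Proof.
elim: ns x off => [|n ns IH] x off //= hs /andP [an ans].
have wns : all wf_tree ns by apply: sub_all ans => t; apply: ac_wf.
case: n an => [|y vs] an.
  by rewrite /= colok_cons /=; apply: IH => //; lia.
move: (an); rewrite ac_node => /and4P [/eqP hv hy cv av].
case: eqP => hc /=; last first.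
  rewrite colok_cons /= -/(colok y 0 vs) cv hv eqxx hy av andbT (mkp_cin (a := off)) //; last by lia.
  have /andP [-> ->] := IH x off.+1 ltac:(lia) ans; rewrite !andbT /=; exact/eqP.
have ha : off < arity x by lia.
have hs' : off + size vs + size ns = arity (ccomp x off y).
  rewrite ccomp_arity // hv -hs. move: hy; clear. lia.
rewrite colok_cat all_cat av /=.
have /andP [-> ->] := IH (ccomp x off y) (off + size vs) hs' ans.
rewrite !andbT -(colok_ext (x := y) (off := 0)) // => p hp.
rewrite (mkp_cin (a := off + p)) //; last by rewrite ltn_add2l.
by rewrite add0n cin_mid // -hv.
Qed.

Lemma mkp_anticoloured x ns : size ns = arity x -> 1 < arity x ->
  all anticoloured ns ->
  anticoloured (Node (mkp x 0 ns).1 (mkp x 0 ns).2).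
Proof.
move=> hs hx hA.
have wns : all wf_tree ns by apply: sub_all hA => t; apply: ac_wf.
have [e h] := mkp_arity (x := x) (off := 0) hs wns.
have /andP [c a] := mkp_ac (x := x) (off := 0) hs hA.
by rewrite ac_node e c a eqxx /=; lia.
Qed.

Lemma mkp_shift x off post a z : off + size post = arity x -> all wf_tree post ->
  a < off -> cout z = nth 0 (cin x) a ->
  mkp (ccomp x a z) (off + arity z - 1) post =
  (ccomp (mkp x off post).1 a z, (mkp x off post).2).
Proof.
elim: post x off => [|n ns IH] x off //= hs wA ha hc.
case/andP: wA => wn wns.
have hz := arity_pos z.
have hax : a < arity x by lia.
have hcol : nth 0 (cin (ccomp x a z)) (off + arity z - 1) = nth 0 (cin x) off.
  by rewrite cin_hi.
have E : (off + arity z - 1).+1 = off.+1 + arity z - 1 by lia.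
case: n wn => [|y vs] wn.
  by rewrite E IH //; lia.
rewrite hcol; case: eqP => hy /=; last by rewrite E IH //; lia.
case/and3P: wn => /eqP hv hy1 wv.
have hox : off < arity x by lia.
rewrite ccomp_assoc_par //.
rewrite (_ : off + arity z - 1 + size vs = off + size vs + arity z - 1); last by lia.
rewrite IH //.
- by rewrite ccomp_arity // hv -hs; move: hy1; clear; lia.
- lia.
- by rewrite cin_lo.
Qed.

Lemma mkp_step x off (m : T) : wf_tree m -> off < arity x ->
  exists x' out,
  [/\ forall ns, mkp x off (m :: ns) =
        ((mkp x' (off + size out) ns).1, out ++ (mkp x' (off + size out) ns).2),
      nleavesL out = nleaves m, arity x' + 1 = arity x + size out,
      all wf_tree out & forall a, a < off -> nth 0 (cin x') a = nth 0 (cin x) a].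
Proof.
move=> wm hox.
case: m wm => [|y vs] wm.
  exists x, [:: Leaf]; split => //=.
    by move=> ns; rewrite addn1.
case/and3P: (wm) => /eqP hv hy wv.
case: (eqVneq (cout y) (nth 0 (cin x) off)) => hc.
  exists (ccomp x off y), vs; split => //.
  - by move=> ns; rewrite mkp_merge.
  - by rewrite ccomp_arity // hv; move: hy; clear; lia.
  - by move=> a ha; rewrite cin_lo.
exists x, [:: Node y vs]; split => //=.
- by move=> ns; rewrite /= (negbTE hc) addn1.
all: by rewrite /nleavesL /= ?addn0 ?andbT.
Qed.

Lemma acgraft_root y (vs : seq T) l N : wf_tree (Node y vs) -> l < nleavesL vs ->
  exists y' us, acgraft (Node y vs) l N = Node y' us /\ cout y' = cout y.
Proof.
case/and3P => /eqP hv hy wv hl.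
have [vpre [v [vpost [l' [E1 E2 E3]]]]] := split_leaves hl.
subst vs l; rewrite acgraft_node //; clear hl wv.
case: v E3 hv => [|v1 v2] E3 hv; last by exists y, (vpre ++ acgraft (Node v1 v2) l' N :: vpost).
rewrite merge_graft_leaf.
case: N => [|z ws]; first by exists y, (vpre ++ Leaf :: vpost).
case: eqP => hz; last by exists y, (vpre ++ Node z ws :: vpost).
exists (ccomp y (size vpre) z), (vpre ++ ws ++ vpost); split => //.
by rewrite ccomp_cout // -hv size_cat /= -addSnnS leq_addr.
Qed.

Lemma mkp_acgraft_base x off (A : seq T) n post l N :
  size A = off -> off + (size post).+1 = arity x ->
  all wf_tree (n :: post) -> wf_tree N -> l < nleaves n ->
  Node (mkp x off (acgraft n l N :: post)).1 (A ++ (mkp x off (acgraft n l N :: post)).2) =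
  acgraft (Node (mkp x off (n :: post)).1 (A ++ (mkp x off (n :: post)).2))
    (nleavesL A + l) N.
Proof.
move=> hA hs /andP [wn wp] wN hl.
have hox : off < arity x by rewrite -hs -addSnnS leq_addr.
case: n wn hl => [|y vs] wn hl.
  have l0 : l = 0 by case: l hl.
  subst l; rewrite [acgraft Leaf 0 N]/= (@mkp_keep1 x off Leaf) // (@mkp_keep2 x off Leaf) // acgraft_node //.
  rewrite merge_graft_leaf hA.
  case: N wN => [|z ws] wN; first by rewrite mkp_keep.
  rewrite (mkp_cin (a := off)) //; last by rewrite addSnnS.
  case: eqP => hz; last by rewrite mkp_keep //= (introF eqP hz).
  case/and3P: wN => /eqP hw hz1 ww.
  rewrite mkp_merge // hw (_ : off + arity z = off.+1 + arity z - 1); last first.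
    by rewrite addSn subn1.
  by rewrite mkp_shift // addSnnS.
case/and3P: (wn) => /eqP hv hy wv.
case: (eqVneq (cout y) (nth 0 (cin x) off)) => hc; last first.
  have [y' [us [E1 E2]]] := acgraft_root N wn hl.
  have k1 : ~~ mrg x off (Node y' us) by rewrite /= E2.
  have k2 : ~~ mrg x off (Node y vs) by [].
  rewrite E1 (mkp_keep1 _ k1) (mkp_keep2 _ k1) (mkp_keep1 _ k2) (mkp_keep2 _ k2).
  by rewrite acgraft_node // E1.
have [vpre [v [vpost [l' [E1 E2 E3]]]]] := split_leaves hl.
subst vs l; clear hl wv.
rewrite [acgraft (Node y _) _ _]acgraft_node //.
rewrite (mkp_merge1 _ _ hc) (mkp_merge2 _ _ hc).
set VS := vpre ++ v :: vpost.
set X := (mkp (ccomp x off y) (off + size VS) post).1.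
set R := (mkp (ccomp x off y) (off + size VS) post).2.
have -> : A ++ VS ++ R = (A ++ vpre) ++ v :: (vpost ++ R) by rewrite -!catA.
rewrite addnA -nleavesL_cat acgraft_node //.
have hq : size vpre < arity y by rewrite -hv size_cat /= -addSnnS leq_addr.
case: v E3 hv wn @VS @X @R => [|v1 v2] E3 hv wn VS X R; last first.
  have hsz : forall u : T, size (vpre ++ u :: vpost) = size VS by move=> u; rewrite !size_cat.
  rewrite (mkp_merge1 _ _ hc) (mkp_merge2 _ _ hc) hsz -/X -/R.
  by rewrite -!catA.
rewrite !merge_graft_leaf.
case: N wN => [|z ws] wN.
  by rewrite (mkp_merge1 _ _ hc) (mkp_merge2 _ _ hc) -/X -/R -!catA.
have hsy : off + size VS + size post = arity (ccomp x off y).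
  by rewrite ccomp_arity // hv -hs; move: hy; clear; lia.
have hmid : nth 0 (cin X) (size (A ++ vpre)) = nth 0 (cin y) (size vpre).
  rewrite size_cat hA (mkp_cin (a := off + size vpre)) //; last first.
    by rewrite ltn_add2l /VS size_cat /= -addSnnS leq_addr.
  by rewrite cin_mid.
rewrite hmid; case: eqP => hz; last first.
  have hsz : size (vpre ++ Node z ws :: vpost) = size VS by rewrite !size_cat.
  by rewrite (mkp_merge1 _ _ hc) (mkp_merge2 _ _ hc) hsz -/X -/R -!catA.
have hc' : cout (ccomp y (size vpre) z) = nth 0 (cin x) off by rewrite ccomp_cout.
rewrite (mkp_merge1 _ _ hc') (mkp_merge2 _ _ hc') -ccomp_assoc_seq //.
case/and3P: wN => /eqP hw hz1 ww.
have -> : off + size (vpre ++ ws ++ vpost) = off + size VS + arity z - 1.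
  rewrite /VS !size_cat /= hw; move: hz1; clear; lia.
rewrite mkp_shift //; last 2 first.
- by rewrite ltn_add2l /VS size_cat /= -addSnnS leq_addr.
- by rewrite cin_mid.
by rewrite -/X -/R size_cat hA -!catA.
Qed.

Lemma mkp_acgraft x off (A pre : seq T) n post l N :
  size A = off -> off + size (pre ++ n :: post) = arity x ->
  all wf_tree (pre ++ n :: post) -> wf_tree N -> l < nleaves n ->
  Node (mkp x off (pre ++ acgraft n l N :: post)).1
       (A ++ (mkp x off (pre ++ acgraft n l N :: post)).2) =
  acgraft (Node (mkp x off (pre ++ n :: post)).1 (A ++ (mkp x off (pre ++ n :: post)).2))
    (nleavesL A + nleavesL pre + l) N.
Proof.
elim: pre x off A => [|m pre IH] x off A hA hs wall wN hl.
  by rewrite addn0; apply: mkp_acgraft_base.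
rewrite cat_cons in hs wall *; case/andP: wall => wm wall.
have hox : off < arity x by rewrite -hs /= -addSnnS leq_addr.
have [x' [out [Est Enl Ear Wout _]]] := mkp_step wm hox.
rewrite !Est !catA nleavesL_cons -Enl addnA -nleavesL_cat.
apply: IH => //; first by rewrite size_cat hA.
move: Ear hs; rewrite /=; clear; lia.
Qed.

Fixpoint norm (t : T) : T :=
  match t with
  | Leaf => Leaf
  | Node x ts => Node (mkp x 0 (map norm ts)).1 (mkp x 0 (map norm ts)).2
  end.

Lemma normN x ts : norm (Node x ts) =
  Node (mkp x 0 (map norm ts)).1 (mkp x 0 (map norm ts)).2.
Proof. by []. Qed.

Lemma allT_mid (P : T -> Prop) pre t post : allT P (pre ++ t :: post) -> P t.
Proof. by elim: pre => [[]|u pre IH [_]] //. Qed.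

Lemma norm_nleaves t : nleaves (norm t) = nleaves t.
Proof.
elim/tree_ind': t => // x ts IH.
rewrite normN !nleavesN mkp_nleaves.
by elim: ts IH => //= t ts IHts [h1 h2]; rewrite !nleavesL_cons h1 IHts.
Qed.

Lemma nleavesL_map_norm ts : nleavesL (map norm ts) = nleavesL ts.
Proof. by elim: ts => //= t ts IH; rewrite !nleavesL_cons norm_nleaves IH. Qed.

Lemma norm_ac t : wf_tree t -> anticoloured (norm t).
Proof.
elim/tree_ind': t => // x ts IH.
case/and3P => /eqP hs hx hw; rewrite normN.
apply: mkp_anticoloured => //; first by rewrite size_map.
by elim: ts IH hw {hs} => //= t ts IHts [h1 h2] /andP [w1 w2]; rewrite h1 // IHts.
Qed.

Lemma norm_id t : anticoloured t -> norm t = t.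
Proof.
elim/tree_ind': t => // x ts IH.
rewrite ac_node normN => /and4P [hs hx hc ha].
have -> : map norm ts = ts.
  by elim: ts IH ha {hs hc} => //= t ts IHts [h1 h2] /andP [a1 a2]; rewrite h1 // IHts.
by rewrite mkp_id.
Qed.

Lemma mkp_cong x off (A ns : seq T) : size A = off -> off + size ns = arity x ->
  1 < arity x -> all wf_tree A -> all wf_tree ns ->
  env_cong (Node x (A ++ ns)) (Node (mkp x off ns).1 (A ++ (mkp x off ns).2)).
Proof.
elim: ns x off A => [|n ns IH] x off A hA hs hx wA wns.
  rewrite /= cats0; apply: env_refl; rewrite wf_node hx wA -hs addn0 hA eqxx //.
case/andP: wns => wn wns.
have keep : ~~ mrg x off n -> env_cong (Node x (A ++ n :: ns))
    (Node (mkp x off (n :: ns)).1 (A ++ (mkp x off (n :: ns)).2)).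
  move=> h; rewrite (mkp_keep1 _ h) (mkp_keep2 _ h) -!cat_rcons.
  apply: IH => //; first by rewrite size_rcons hA.
  - by rewrite -hs /= addSnnS.
  - by rewrite -cats1 all_cat wA /= wn.
case: n wn keep hs => [|y vs] wn keep hs; first by apply: keep.
case: (eqVneq (cout y) (nth 0 (cin x) off)) => hc; last by apply: keep.
case/and3P: (wn) => /eqP hv hy wv.
have hox : off < arity x by rewrite -hs -addSnnS leq_addr.
rewrite (mkp_merge1 _ _ hc) (mkp_merge2 _ _ hc).
have g : Qr x y A vs ns.
  by apply: G3 => //; rewrite hA.
rewrite /Qr hA in g; apply: env_trans g _.
- rewrite !catA; apply: IH => //.
  + by rewrite size_cat hA.
  + by rewrite ccomp_arity // hv -hs /=; move: hy; clear; lia.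
  + by rewrite ccomp_arity //; move: hx (arity_pos y); clear; lia.
  + by rewrite all_cat wA wv.
Qed.

Lemma norm_cong t : wf_tree t -> env_cong (norm t) t.
Proof.
elim/tree_ind': t => [|x ts IH] w; first exact: env_refl.
have w' := w; case/and3P: w' => /eqP hs hx hw.
rewrite normN; apply: env_sym.
apply: env_trans (@node_cong x norm ts [::] _ w) _.
  by elim: ts IH hw {w hs} => //= t ts IHts [h1 h2] /andP [w1 w2]; split;
    [apply: env_sym; apply: h1 | apply: IHts].
have := @mkp_cong x 0 [::] (map norm ts) erefl.
rewrite add0n size_map => /(_ hs hx erefl); apply.
by elim: ts IH hw {w hs} => //= t ts IHts [h1 h2] /andP [w1 w2];
  rewrite IHts // andbT; apply: ac_wf; apply: norm_ac.
Qed.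

Lemma norm_graft S i N : wf_tree S -> wf_tree N -> i < nleaves S ->
  norm (graft S i N) = acgraft (norm S) i (norm N).
Proof.
move=> + wN; elim/tree_ind': S i => [|x ts IH] i.
  by move=> _; case: i.
case/and3P => /eqP hs hx hw; rewrite nleavesN => hi.
have [pre [t [post [l [E1 E2 E3]]]]] := split_leaves hi.
subst ts i.
rewrite graft_node // !normN !map_cat /=.
rewrite (allT_mid IH); last 2 first.
- by move: hw; rewrite all_cat /= => /and3P [].
- by [].
have wts : all wf_tree (map norm pre ++ norm t :: map norm post).
  rewrite -map_cons -map_cat; apply: sub_all _ (_ : all anticoloured _).
    by move=> u; apply: ac_wf.
  by elim: (pre ++ t :: post) hw => //= u us IHus /andP [w1 w2]; rewrite norm_ac // IHus.
have := @mkp_acgraft x 0 [::] (map norm pre) (norm t) (map norm post) l (norm N) erefl.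
rewrite /= nleavesL_map_norm norm_nleaves; apply => //.
- by rewrite add0n -hs !size_cat /= !size_map.
- by apply: ac_wf; apply: norm_ac.
Qed.

Lemma colok_nseq x off n : colok x off (nseq n Leaf) = true.
Proof. by elim: n off => //= n IH off; rewrite colok_cons IH. Qed.

Lemma corolla_ac (x : lab) : 1 < arity x -> anticoloured (corolla x).
Proof.
move=> h; rewrite /corolla ac_node size_nseq eqxx h colok_nseq /=.
by elim: (arity x).
Qed.

Lemma nleaves_corolla (x : lab) : nleaves (corolla x) = arity x.
Proof. by rewrite /corolla nleavesN nleavesL_nseq. Qed.

Lemma acgraft_corolla (x y : lab) i : i < arity x -> cout y = nth 0 (cin x) i ->
  acgraft (corolla x) i (corolla y) = corolla (ccomp x i y).
Proof.
move=> hi hc.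
have E : nseq (arity x) (Leaf : T) = nseq i Leaf ++ Leaf :: nseq (arity x - i.+1) Leaf.
  by rewrite -[Leaf :: _]/(nseq (arity x - i.+1).+1 Leaf) -nseqD; congr nseq; lia.
rewrite /corolla E.
have := @acgraft_node x (nseq i Leaf) Leaf (nseq (arity x - i.+1) Leaf) 0
  (Node y (nseq (arity y) Leaf)) erefl.
rewrite addn0 nleavesL_nseq => ->.
rewrite merge_graft_leaf size_nseq hc eqxx ccomp_arity // -!nseqD.
congr Node; congr nseq; move: (arity_pos y); clear -hi; lia.
Qed.

Lemma norm_env s t : env_cong s t -> norm s = norm t.
Proof.
elim=> {s t}.
- move=> x i y hx hy hi hc.
  rewrite norm_graft ?corolla_wf ?nleaves_corolla // !norm_id ?corolla_ac //.
    by rewrite acgraft_corolla.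
  by rewrite ccomp_arity //; lia.
- by [].
- by move=> s t _ ->.
- by move=> s t u _ -> _ ->.
- move=> S S' T0 T' i hS eS hT eT hi.
  have [w1 w2] := env_cong_wf hS; have [w3 w4] := env_cong_wf hT.
  rewrite !norm_graft // ?eS ?eT //.
  by rewrite -norm_nleaves -eS norm_nleaves.
Qed.

End S.

Theorem proposition1p1 (k : nat) (C : coloured_operad k) (hk : 0 < k) :
  (forall t : ctree C, wf_tree t ->
     exists! a : ctree C, anticoloured a /\ env_cong a t)
  /\
  (forall (a b : ctree C) (i : nat),
     anticoloured a -> anticoloured b -> i < nleaves a ->
     anticoloured (acgraft a i b) /\ env_cong (acgraft a i b) (graft a i b)).
Proof.
split.
- move=> t wt; exists (norm t); split.
    by split; [apply: norm_ac | apply: norm_cong].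
  move=> a [ha hat].
  by rewrite -(norm_id ha) (norm_env hat).
- move=> a b i ha hb hi.
  have wa := ac_wf ha; have wb := ac_wf hb.
  have E : acgraft a i b = norm (graft a i b).
    by rewrite norm_graft // !norm_id.
  rewrite E; split; first by apply: norm_ac; apply: graft_wf.
  by apply: norm_cong; apply: graft_wf.
Qed.
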